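(* Let $G$ be a finite graph and $k\ge 1$ an integer. Then $G$ contains a clique of size $k$ if and only if, in the canonical adjacency matrix $\mathbf{M}$ of $G$, all entries $\mathbf{M}_{ij}$ with $1\le i<j\le k$ equal $1$.
   Context: For an $n\times n$ adjacency matrix $\mathbf{M}$ of a finite simple graph (with respect to some ordering of its vertices), its bit-string is obtained by concatenating the entries strictly above the diagonal column by column, left to right, reading each column from top to bottom. The canonical adjacency matrix of a graph $G$ is the unique adjacency matrix of $G$ (over all orderings of its vertices) whose bit-string is lexicographically greatest. *)

(* Defs.v *)
From mathcomp Require Import all_boot all_algebra.
Set Implicit Arguments. Unset Strict Implicit. Unset Printing Implicit Defensive.

Definition simple_graph (T : finType) (e : rel T) : Prop :=
  symmetric e /\ irreflexive e.

Definition has_clique (T : finType) (e : rel T) (k : nat) : Prop :=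
  exists K : {set T}, #|K| = k /\
    {in K &, forall x y, x != y -> e x y}.

(* Adjacency matrix of the graph w.r.t. the vertex ordering f
   (vertex number i, 0-indexed, is f i). Entry true = 1, false = 0. *)
Definition adjmat (T : finType) (e : rel T) (f : 'I_#|T| -> T) : 'M[bool]_#|T| :=
  \matrix_(i, j) e (f i) (f j).

(* Bit-string: entries strictly above the diagonal, column by column
   (left to right), each column read top to bottom. *)
Definition bitstring (n : nat) (M : 'M[bool]_n) : seq bool :=
  flatten [seq [seq M i j | i <- filter (fun i : 'I_n => (i < j)%N) (enum 'I_n)] | j : 'I_n <- enum 'I_n].

Fixpoint lex_le (s t : seq bool) : bool :=
  match s, t with
  | [::], _ => true
  | _ :: _, [::] => false
  | a :: s', b :: t' => (~~ a && b) || ((a == b) && lex_le s' t')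
  end.

Definition is_adjmat (T : finType) (e : rel T) (M : 'M[bool]_#|T|) : Prop :=
  exists f : 'I_#|T| -> T, bijective f /\ M = adjmat e f.

Definition is_canonical_adjmat (T : finType) (e : rel T) (M : 'M[bool]_#|T|) : Prop :=
  is_adjmat e M /\
  forall M', is_adjmat e M' -> lex_le (bitstring M') (bitstring M).

(* Main.v *)
Require Import Defs.
From mathcomp Require Import all_boot all_algebra.

Lemma lex_cat_all (s1 s2 t1 t2 : seq bool) :
  size s1 = size t1 -> all id s1 -> lex_le (s1 ++ s2) (t1 ++ t2) -> all id t1.
Proof.
elim: s1 t1 => [|a s1 IH] [|b t1] //= [Hs] /andP[Ha Hall].
move: Ha => -> /= /andP[/eqP <- H] /=.
exact: IH H.
Qed.

Section Split.
Variables (n k : nat).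
Definition colb (N : 'M[bool]_n) (j : 'I_n) :=
  [seq N i j | i <- filter (fun i : 'I_n => (i < j)%N) (enum 'I_n)].
Definition Pb (N : 'M[bool]_n) := flatten [seq colb N j | j <- take k (enum 'I_n)].
Definition Rb (N : 'M[bool]_n) := flatten [seq colb N j | j <- drop k (enum 'I_n)].

Lemma bitstring_split N : bitstring N = Pb N ++ Rb N.
Proof.
by rewrite /bitstring /Pb /Rb -flatten_cat -map_cat cat_take_drop.
Qed.

Lemma size_Pb N N' : size (Pb N) = size (Pb N').
Proof.
rewrite /Pb !size_flatten /shape -!map_comp; congr sumn; apply: eq_map => j /=.
by rewrite /colb !size_map.
Qed.

Lemma Pb_all N : all id (Pb N) <->
  (forall i j : 'I_n, (i < j)%N -> (j < k)%N -> N i j).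
Proof.
split.
  move=> /allP H i j lij ljk; apply: (H (N i j)).
  apply/flatten_mapP; exists j.
    by rewrite in_take ?mem_enum // index_enum_ord.
  by apply/mapP; exists i => //; rewrite mem_filter lij mem_enum.
move=> H; apply/allP => x /flatten_mapP[j Hj /mapP[i Hi ->]].
rewrite mem_filter in Hi; case/andP: Hi => lij _.
apply: H => //.
by rewrite in_take ?mem_enum // index_enum_ord in Hj.
Qed.
End Split.

Theorem mainTheorem9 (T : finType) (e : rel T) (k : nat) (M : 'M[bool]_#|T|) :
  simple_graph e -> (1 <= k)%N -> is_canonical_adjmat e M ->
  has_clique e k <->
  ((k <= #|T|)%N /\ forall i j : 'I_#|T|, (i < j)%N -> (j < k)%N -> M i j).
Proof.
move=> [esym eirr] k1 [[f [fbij ->]] Hcan]; split.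
- move=> [K [cK HK]].
  have kT : (k <= #|T|)%N by rewrite -cK max_card.
  split => //.
  have [x0 x0K] : exists x0, x0 \in K.
    by apply/set0Pn; rewrite -card_gt0 cK.
  pose s := enum K ++ enum (~: K).
  have ss' : size s = #|T|.
    by rewrite size_cat -!cardE cardsC.
  have us : uniq s.
    rewrite cat_uniq !enum_uniq /= andbT.
    apply/hasPn => x /=; rewrite !mem_enum in_setC; by move=> h.
  pose g (i : 'I_#|T|) := nth x0 s i.
  have ginj : injective g.
    move=> i j; rewrite /g => /eqP; rewrite nth_uniq ?ss' //.
    by move/eqP; apply: val_inj.
  have gbij : bijective g.
    by apply: inj_card_bij => //; rewrite card_ord.
  have gK (i : 'I_#|T|) : (i < k)%N -> g i \in K.
    move=> ik; rewrite /g nth_cat -cardE cK ik.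
    by rewrite -mem_enum mem_nth // -cardE cK.
  have := Hcan (adjmat e g) (ex_intro _ g (conj gbij erefl)).
  rewrite !(bitstring_split _ k) => /(@lex_cat_all _ _ _ _ (size_Pb _ _ _ _)) H.
  apply/(Pb_all _ k); apply: H; apply/(Pb_all _ k) => i j lij ljk.
  rewrite mxE; apply: HK; rewrite ?gK //; first exact: ltn_trans ljk.
  apply/eqP => /ginj eij; by rewrite eij ltnn in lij.
- move=> [kT H].
  have [finv fK Kf] := fbij.
  have finj : injective f by exact: can_inj fK.
  exists (f @: [set i : 'I_#|T| | (i < k)%N]); split.
    rewrite card_imset //.
    have -> : [set i : 'I_#|T| | (i < k)%N] = widen_ord kT @: [set: 'I_k].
      apply/setP => i; rewrite inE; apply/idP/imsetP.
        by move=> ik; exists (Ordinal ik) => //; apply: val_inj.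
      by case=> j _ ->; rewrite /= ltn_ord.
    rewrite card_imset ?cardsT ?card_ord //.
    by move=> a b /(congr1 val) /= /val_inj.
  move=> x y /imsetP[i]; rewrite inE => ik -> /imsetP[j]; rewrite inE => jk -> neq.
  have nij : i != j by apply: contraNneq neq => ->.
  case: (ltngtP i j) => [lij|lji|/val_inj eij]; last by rewrite eij eqxx in nij.
    by have := H i j lij jk; rewrite mxE.
  by have := H j i lji ik; rewrite mxE esym.
Qed.
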